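(* For any $x\in\mathbb{R}^n$ and $\widehat{\mathbf{A}}=(\mathbf{A}_1,\dots,\mathbf{A}_n)\in I(\mathbb{R})^n$, \[x^T\odot\widehat{\mathbf{A}}\preceq\|x\|\odot\big[\|\widehat{\mathbf{A}}\|_{I(\mathbb{R})^n},\|\widehat{\mathbf{A}}\|_{I(\mathbb{R})^n}\big].\]
   Context: $I(\mathbb{R})$: nonempty compact intervals $\mathbf{A}=[\underline{a},\overline{a}]$; $\mathbf{A}\oplus\mathbf{B}=[\underline{a}+\underline{b},\overline{a}+\overline{b}]$; $\lambda\odot\mathbf{A}=[\min\{\lambda\underline{a},\lambda\overline{a}\},\max\{\lambda\underline{a},\lambda\overline{a}\}]$; $x^T\odot\widehat{\mathbf{A}}=\bigoplus_{i=1}^n x_i\odot\mathbf{A}_i$; $\mathbf{A}\preceq\mathbf{B}$ iff $\underline{a}\le\underline{b}$ and $\overline{a}\le\overline{b}$; $\|\mathbf{A}\|_{I(\mathbb{R})}=\max\{|\underline{a}|,|\overline{a}|\}$; $\|\widehat{\mathbf{A}}\|_{I(\mathbb{R})^n}=\sqrt{\sum_i\|\mathbf{A}_i\|_{I(\mathbb{R})}^2}$; $\|x\|$ Euclidean norm. *)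

(* Defs.v *)
(* R : rcfType (real closed field, so Num.sqrt exists); the
   paper's R is the reals, covered by taking R := any realType. *)
From mathcomp Require Import all_boot all_order all_algebra.
Set Implicit Arguments. Unset Strict Implicit. Unset Printing Implicit Defensive.
Import Order.TTheory GRing.Theory Num.Theory.
Local Open Scope ring_scope.

Record ivl (R : realDomainType) := Interval {
  ilo : R; ihi : R; ilo_le_ihi : ilo <= ihi }.

Section IntervalOps.
Variable R : rcfType.

Definition iadd (A B : ivl R) : ivl R :=
  @Interval R (ilo A + ilo B) (ihi A + ihi B) (lerD (ilo_le_ihi A) (ilo_le_ihi B)).

Lemma iscale_ok (l : R) (A : ivl R) :
  Num.min (l * ilo A) (l * ihi A) <= Num.max (l * ilo A) (l * ihi A).
Proof. by rewrite ge_min !le_max lexx. Qed.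

Definition iscale (l : R) (A : ivl R) : ivl R :=
  @Interval R (Num.min (l * ilo A) (l * ihi A)) (Num.max (l * ilo A) (l * ihi A))
    (iscale_ok l A).

Definition izero : ivl R := @Interval R 0 0 (lexx 0).

Definition idot (n : nat) (x : 'I_n -> R) (A : 'I_n -> ivl R) : ivl R :=
  \big[iadd/izero]_(i < n) iscale (x i) (A i).

Definition ile (A B : ivl R) : Prop := ilo A <= ilo B /\ ihi A <= ihi B.

Definition inorm (A : ivl R) : R := Num.max `|ilo A| `|ihi A|.

Definition ivnorm (n : nat) (A : 'I_n -> ivl R) : R :=
  Num.sqrt (\sum_(i < n) inorm (A i) ^+ 2).

Definition enorm (n : nat) (x : 'I_n -> R) : R := Num.sqrt (\sum_(i < n) x i ^+ 2).

Definition ipoint (a : R) : ivl R := @Interval R a a (lexx a).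

End IntervalOps.

(* Main.v *)
Require Import Defs.
From mathcomp Require Import all_boot all_order all_algebra.
From mathcomp Require Import ring.
Import Order.TTheory GRing.Theory Num.Theory.
Set Implicit Arguments. Unset Strict Implicit.
Local Open Scope ring_scope.

Lemma cs_aux (R : rcfType) (n : nat) (a b : 'I_n -> R) :
  \sum_(i < n) a i * b i <=
  Num.sqrt (\sum_(i < n) a i ^+ 2) * Num.sqrt (\sum_(i < n) b i ^+ 2).
Proof.
set P := \sum_(i < n) a i ^+ 2; set Q := \sum_(i < n) b i ^+ 2.
set p := Num.sqrt P; set q := Num.sqrt Q.
have P0 : 0 <= P by apply: sumr_ge0 => i _; exact: sqr_ge0.
have Q0 : 0 <= Q by apply: sumr_ge0 => i _; exact: sqr_ge0.
have pP : p ^+ 2 = P by rewrite sqr_sqrtr.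
have qQ : q ^+ 2 = Q by rewrite sqr_sqrtr.
have p0 : 0 <= p by apply: sqrtr_ge0.
have q0 : 0 <= q by apply: sqrtr_ge0.
have key : forall i, 2 * (a i * b i) * (p * q) <= a i ^+ 2 * q ^+ 2 + b i ^+ 2 * p ^+ 2.
  move=> i; have := sqr_ge0 (a i * q - b i * p).
  rewrite -subr_ge0 => H; rewrite -subr_ge0.
  suff -> : a i ^+ 2 * q ^+ 2 + b i ^+ 2 * p ^+ 2 - 2 * (a i * b i) * (p * q)
     = (a i * q - b i * p) ^+ 2 - 0 by [].
  by ring.
have S : 2 * (\sum_(i < n) a i * b i) * (p * q) <= P * q ^+ 2 + Q * p ^+ 2.
  rewrite mulr_sumr mulr_suml /P /Q !mulr_suml -big_split /=.
  by apply: ler_sum => i _; exact: key.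
rewrite pP qQ in S.
have [pq0|pqpos] := eqVneq (p * q) 0.
  have /orP[/eqP pe|/eqP qe] : (p == 0) || (q == 0) by rewrite -mulf_eq0 pq0.
  - have Pz : P = 0 by rewrite -pP pe expr0n.
    have az : forall i, a i = 0.
      move=> i; apply/eqP; rewrite -sqrf_eq0; apply/eqP.
      move/eqP: Pz; rewrite psumr_eq0; last by move=> j _; exact: sqr_ge0.
      by move/allP => /(_ i (mem_index_enum _)) /eqP.
    rewrite pq0 big1 // => i _; by rewrite az mul0r.
  - have Qz : Q = 0 by rewrite -qQ qe expr0n.
    have bz : forall i, b i = 0.
      move=> i; apply/eqP; rewrite -sqrf_eq0; apply/eqP.
      move/eqP: Qz; rewrite psumr_eq0; last by move=> j _; exact: sqr_ge0.
      by move/allP => /(_ i (mem_index_enum _)) /eqP.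
    rewrite pq0 big1 // => i _; by rewrite bz mulr0.
have pqg : 0 < p * q by rewrite lt_def pqpos mulr_ge0.
set s := \sum_(i < n) a i * b i in S *.
have E : P * Q + Q * P = 2 * (p * q) * (p * q).
  by rewrite -pP -qQ; ring.
rewrite E in S.
have : 2 * (p * q) * s <= 2 * (p * q) * (p * q) by rewrite (_ : 2 * (p * q) * s = 2 * s * (p * q)) //; ring.
by rewrite ler_pM2l // mulr_gt0.
Qed.

Lemma term_bound (R : rcfType) (l : R) (A : ivl R) :
  Num.max (l * ilo A) (l * ihi A) <= `|l| * inorm A.
Proof.
rewrite ge_max /inorm; apply/andP; split;
  (apply: le_trans (ler_norm _) _; rewrite normrM; apply: ler_wpM2l => //;
   by rewrite le_max lexx ?orbT).
Qed.

Lemma le_tr (R : numDomainType) (x y z : R) : y <= z -> x <= y -> x <= z.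
Proof. by move=> h1 h2; apply: le_trans h2 h1. Qed.

Theorem mainTheorem12 (R : rcfType) (n : nat) (x : 'I_n -> R)
    (A : 'I_n -> ivl R) :
  ile (idot x A) (iscale (enorm x) (ipoint (ivnorm A))).
Proof.
have CS : \sum_(i < n) `|x i| * inorm (A i) <= enorm x * ivnorm A.
  have := @cs_aux R n (fun i => `|x i|) (fun i => inorm (A i)).
  have E : \sum_(i < n) `|x i| ^+ 2 = \sum_(i < n) x i ^+ 2.
    by apply: eq_bigr => i _; rewrite real_normK ?num_real.
  by rewrite E.
rewrite /ile /= /idot minxx maxxx; split.
  rewrite (big_morph (@ilo R) (id1 := 0) (op1 := +%R)) //.
  apply: le_tr CS _; apply: ler_sum => i _ /=.
  have H := term_bound (x i) (A i).
  have H2 : Num.min (x i * ilo (A i)) (x i * ihi (A i)) <= Num.max (x i * ilo (A i)) (x i * ihi (A i)).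
    by rewrite ge_min !le_max lexx.
  exact: (le_trans H2 H).
rewrite /idot (big_morph (@ihi R) (id1 := 0) (op1 := +%R)) //.
apply: le_tr CS _; apply: ler_sum => i _ /=; exact: term_bound.
Qed.
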